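(* For every cardinal $\kappa$ there is a regular cardinal $\lambda>\kappa$ such that $\mathrm{Gal}(\mathcal{D}_\lambda,\lambda,2^\lambda)$ holds. In particular, it is impossible that $\mathrm{Gal}(\mathcal{D}_\theta,\theta,2^\theta)$ fails for every regular uncountable cardinal $\theta$.
   Context: For a regular uncountable cardinal $\theta$, $\mathcal{D}_\theta$ denotes the club filter on $\theta$. For a filter $\mathcal{F}$ and cardinals $\mu\leq\lambda$, $\mathrm{Gal}(\mathcal{F},\mu,\lambda)$ is the statement: for every $\mathcal{C}\subseteq\mathcal{F}$ with $|\mathcal{C}|=\lambda$ there is $\mathcal{E}\subseteq\mathcal{C}$ with $|\mathcal{E}|=\mu$ such that $\bigcap\mathcal{E}\in\mathcal{F}$. *)

(* Defs.v *)
(* Cardinals are modelled as well-ordered types (initial ordinals). *)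
From Stdlib Require Import Wellfounded.

Definition Univ := Type.

Definition injective {A B : Type} (f : A -> B) : Prop :=
  forall x y, f x = f y -> x = y.
Definition bijective {A B : Type} (f : A -> B) : Prop :=
  injective f /\ forall y, exists x, f x = y.
Definition card_le (A B : Type) : Prop := exists f : A -> B, injective f.
Definition equipotent (A B : Type) : Prop := exists f : A -> B, bijective f.
Definition card_lt (A B : Type) : Prop := card_le A B /\ ~ card_le B A.

Definition strict_wellorder {T : Type} (lt : T -> T -> Prop) : Prop :=
  (forall x, ~ lt x x) /\
  (forall x y z, lt x y -> lt y z -> lt x z) /\
  (forall x y, lt x y \/ x = y \/ lt y x) /\
  well_founded lt.

(* (T, lt) is a cardinal: a well-order (ordinal) not equipotent to any of its
   proper initial segments, i.e. an initial ordinal. *)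
Definition is_cardinal (T : Type) (lt : T -> T -> Prop) : Prop :=
  strict_wellorder lt /\
  forall t : T, ~ equipotent T {x : T | lt x t}.

Definition uncountable (T : Type) : Prop := ~ card_le T nat.

Definition unbounded {T : Type} (lt : T -> T -> Prop) (A : T -> Prop) : Prop :=
  forall x, exists c, A c /\ lt x c.

Definition regular_cardinal (T : Type) (lt : T -> T -> Prop) : Prop :=
  is_cardinal T lt /\
  forall A : T -> Prop, unbounded lt A -> equipotent {x : T | A x} T.

Definition regular_uncountable_cardinal (T : Type) (lt : T -> T -> Prop) : Prop :=
  regular_cardinal T lt /\ uncountable T.

Definition closed_set {T : Type} (lt : T -> T -> Prop) (C : T -> Prop) : Prop :=
  forall t, (exists c, C c /\ lt c t) ->
            (forall s, lt s t -> exists c, C c /\ lt s c /\ lt c t) -> C t.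

Definition club {T : Type} (lt : T -> T -> Prop) (C : T -> Prop) : Prop :=
  closed_set lt C /\ unbounded lt C.

Definition club_filter {T : Type} (lt : T -> T -> Prop) (A : T -> Prop) : Prop :=
  exists C, club lt C /\ forall x, C x -> A x.

(* Gal(F, mu, lambda) with mu, lambda given as types (cardinalities) *)
Definition Gal {T : Type} (F : (T -> Prop) -> Prop) (Mu Lam : Type) : Prop :=
  forall Cc : (T -> Prop) -> Prop,
    (forall A, Cc A -> F A) ->
    equipotent {A : T -> Prop | Cc A} Lam ->
    exists E : (T -> Prop) -> Prop,
      (forall A, E A -> Cc A) /\
      equipotent {A : T -> Prop | E A} Mu /\
      F (fun x => forall A, E A -> A x).

(* Gal(D_theta, theta, 2^theta); 2^theta is the cardinality of the power set T -> Prop *)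
Definition Gal_club (T : Type) (lt : T -> T -> Prop) : Prop :=
  Gal (club_filter lt) T (T -> Prop).

(* Main.v *)
Require Import Defs.
From Stdlib Require Import Classical ClassicalEpsilon FunctionalExtensionality PropExtensionality ProofIrrelevance Lia Arith Wellfounded.

Module WOM.
From mathcomp Require Import ssreflect ssrbool eqtype boolp wochoice.
Lemma wo_min (T : Type) : exists R : T -> T -> bool,
  forall P : T -> Prop, (exists x, P x) -> exists z, P z /\ (forall y, P y -> R z y) /\
     forall z', P z' -> (forall y, P y -> R z' y) -> z' = z.
Proof.
case: (well_ordering_principle {classic T}) => R HR.
exists R => P [x Px].
have ne : nonempty (fun x : {classic T} => `[< P x >]) by exists x; apply/asboolP.
case: (HR _ ne) => z [[Hz Hlb] Hu].
exists z; split; first by move: Hz => /asboolP.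
split.
  by move=> y Py; apply: Hlb; apply/asboolP.
move=> z' Pz' Hz'; symmetry; apply: Hu; split; first by apply/asboolP.
by move=> y /asboolP; apply: Hz'.
Qed.
End WOM.


Lemma wo_exists (T : Type) : exists lt : T -> T -> Prop, strict_wellorder lt.
Proof.
  destruct (WOM.wo_min T) as [R HR].
  assert (refl : forall x, R x x = true).
  { intros x. destruct (HR (fun z => z = x)) as [z [Pz [Hlb Hu]]]; [eauto|].
    subst z. apply Hlb; auto. }
  assert (antis : forall x y, R x y = true -> R y x = true -> x = y).
  { intros x y Hxy Hyx.
    destruct (HR (fun z => z = x \/ z = y)) as [z [Pz [Hlb Hu]]]; [eauto|].
    assert (x = z). { apply Hu; [auto|]. intros w [-> | ->]; auto. }
    assert (y = z). { apply Hu; [auto|]. intros w [-> | ->]; auto. }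
    congruence. }
  assert (tot : forall x y, R x y = true \/ R y x = true).
  { intros x y.
    destruct (HR (fun z => z = x \/ z = y)) as [z [Pz [Hlb Hu]]]; [eauto|].
    destruct Pz as [-> | ->]; [left|right]; apply Hlb; auto. }
  exists (fun x y => x <> y /\ R x y = true).
  split; [|split; [|split]].
  - intros x [H _]; apply H; reflexivity.
  - intros x y z [H1 H2] [H3 H4]. split.
    + intros ->. apply H3. apply antis; auto.
    + destruct (HR (fun w => w = x \/ w = y \/ w = z)) as [m [Pm [Hlb Hu]]]; [eauto|].
      destruct Pm as [-> | [-> | ->]].
      * apply Hlb; auto.
      * exfalso. apply H1. apply antis; [assumption|]. apply Hlb; auto.
      * exfalso. apply H3. apply antis; [assumption|]. apply Hlb; auto.
  - intros x y. destruct (classic (x = y)) as [e|n]; [auto|].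
    destruct (tot x y); [left|right; right]; split; auto.
  - intros x. apply NNPP. intros nA.
    destruct (HR (fun z => ~ Acc (fun x y => x <> y /\ R x y = true) z)) as [m [Pm [Hlb Hu]]]; [eauto|].
    apply Pm. constructor. intros y [Hne Hy]. apply NNPP. intros nAy.
    apply Hne. apply antis; [assumption|]. apply Hlb. exact nAy.
Qed.


Lemma card_le_refl (A : Type) : card_le A A.
Proof. exists (fun x => x). intros x y H; exact H. Qed.

Lemma card_le_trans (A B C : Type) : card_le A B -> card_le B C -> card_le A C.
Proof.
  intros [f Hf] [g Hg]. exists (fun x => g (f x)). intros x y H. apply Hf, Hg, H.
Qed.

Lemma pred_ext (A : Type) (P Q : A -> Prop) : (forall x, P x <-> Q x) -> P = Q.
Proof. intros H; apply functional_extensionality; intros x; apply propositional_extensionality; apply H. Qed.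

Definition img {A B : Type} (h : A -> B) (S : A -> Prop) : B -> Prop :=
  fun b => exists a, h a = b /\ S a.

Lemma img_inj (A B : Type) (h : A -> B) : injective h -> injective (img h).
Proof.
  intros Hh S T E. apply pred_ext. intros a.
  assert (E' : img h S (h a) <-> img h T (h a)) by (rewrite E; tauto).
  unfold img in E'. split; intros Ha.
  - destruct (proj1 E' (ex_intro _ a (conj eq_refl Ha))) as [a' [e Ta']].
    apply Hh in e. subst; exact Ta'.
  - destruct (proj2 E' (ex_intro _ a (conj eq_refl Ha))) as [a' [e Ta']].
    apply Hh in e. subst; exact Ta'.
Qed.

Lemma pow_mono (A B : Type) : card_le A B -> card_le (A -> Prop) (B -> Prop).
Proof. intros [h Hh]. exists (img h). apply img_inj, Hh. Qed.

Lemma cantor (A : Type) : ~ card_le (A -> Prop) A.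
Proof.
  intros [f Hf].
  set (D := fun a => exists S, f S = a /\ ~ S a).
  destruct (classic (D (f D))) as [H|H].
  - destruct H as [S0 [e nS]]. apply Hf in e. rewrite e in nS. apply nS.
    exists D. split; [reflexivity|exact nS].
  - apply H. exists D. split; [reflexivity|exact H].
Qed.

Definition equip_inv (A B : Type) : equipotent A B -> card_le B A.
Proof.
  intros [f [Hi Hs]].
  exists (fun b => proj1_sig (constructive_indefinite_description _ (Hs b))).
  intros x y E.
  destruct (constructive_indefinite_description _ (Hs x)) as [a Ha].
  destruct (constructive_indefinite_description _ (Hs y)) as [b Hb]. simpl in E. subst. reflexivity.
Qed.

Lemma equip_le (A B : Type) : equipotent A B -> card_le A B.
Proof. intros [f [Hi _]]. exists f; exact Hi. Qed.

Lemma bij_equip (A B : Type) (g : B -> A) : injective g -> (forall a, exists b, g b = a) -> equipotent A B.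
Proof.
  intros Hi Hs.
  exists (fun a => proj1_sig (constructive_indefinite_description _ (Hs a))).
  split.
  - intros x y E.
    destruct (constructive_indefinite_description _ (Hs x)) as [a Ha].
    destruct (constructive_indefinite_description _ (Hs y)) as [b Hb]. simpl in E. subst. reflexivity.
  - intros b. exists (g b).
    destruct (constructive_indefinite_description _ (Hs (g b))) as [a Ha]. simpl. apply Hi, Ha.
Qed.

Section Small.
Variable M : Type.
Hypothesis HMsum : card_le (M + M) M.
Hypothesis HMprod : card_le (M * M) M.
Hypothesis Hm0 : M.

Definition small (A : Type) := card_le (A -> Prop) (M -> Prop).

Lemma small_inj (A B : Type) : card_le A B -> small B -> small A.
Proof. intros H1 H2. eapply card_le_trans; [apply pow_mono, H1|exact H2]. Qed.

Lemma small_M : small M.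
Proof. apply card_le_refl. Qed.

Lemma WW_W : card_le ((M -> Prop) * (M -> Prop)) (M -> Prop).
Proof.
  destruct HMsum as [h Hh].
  exists (fun p => img h (fun z => match z with inl a => fst p a | inr b => snd p b end)).
  intros [S1 T1] [S2 T2] E. apply img_inj in E; [|exact Hh].
  simpl in E.
  f_equal; apply functional_extensionality; intros a.
  - exact (f_equal (fun F => F (inl a)) E).
  - exact (f_equal (fun F => F (inr a)) E).
Qed.

Lemma MW_W : card_le (M -> M -> Prop) (M -> Prop).
Proof.
  destruct HMprod as [h Hh].
  exists (fun G => img h (fun p => G (fst p) (snd p))).
  intros G1 G2 E. apply img_inj in E; [|exact Hh].
  apply functional_extensionality; intros a; apply functional_extensionality; intros b.
  exact (f_equal (fun F => F (a, b)) E).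
Qed.

Lemma small_sum (A B : Type) : small A -> small B -> small (A + B).
Proof.
  intros [p Hp] [q Hq]. eapply card_le_trans; [|exact WW_W].
  exists (fun P => (p (fun a => P (inl a)), q (fun b => P (inr b)))).
  intros P1 P2 E. injection E as E1 E2. apply Hp in E1. apply Hq in E2.
  apply functional_extensionality; intros [a|b].
  - exact (f_equal (fun F => F a) E1).
  - exact (f_equal (fun F => F b) E2).
Qed.

Lemma small_unit : small unit.
Proof.
  exists (fun P => fun _ : M => P tt). intros P1 P2 E.
  apply functional_extensionality; intros []. exact (f_equal (fun F => F Hm0) E).
Qed.

Lemma small_fun (I : Type) : small I -> card_le (I -> M -> Prop) (M -> Prop).
Proof.
  intros [p Hp]. eapply card_le_trans; [|exact MW_W].
  exists (fun F => fun m => p (fun i => F i m)).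
  intros F1 F2 E.
  apply functional_extensionality; intros i; apply functional_extensionality; intros m.
  assert (E2 := f_equal (fun G => G m) E). simpl in E2. apply Hp in E2.
  exact (f_equal (fun G => G i) E2).
Qed.

End Small.


Definition cid {A : Type} {P : A -> Prop} (H : exists x, P x) : {x | P x} :=
  constructive_indefinite_description P H.

Lemma sig_eq (A : Type) (P : A -> Prop) (x y : {a | P a}) : proj1_sig x = proj1_sig y -> x = y.
Proof.
  destruct x as [x px], y as [y py]; simpl; intros e; subst. f_equal. apply proof_irrelevance.
Qed.

Section Main.
Variables (M L : Type) (lt : L -> L -> Prop).
Hypothesis HMsum : card_le (M + M) M.
Hypothesis HMprod : card_le (M * M) M.
Hypothesis Hm0 : M.
Hypothesis Hnat : card_le nat M.
Hypothesis Hwo : strict_wellorder lt.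
Hypothesis Hseg : forall x, small M {y | lt y x}.
Hypothesis Hnot : ~ small M L.
Hypothesis HLW : card_le L (M -> Prop).

Definition le x y := lt x y \/ x = y.

Lemma irr : forall x, ~ lt x x.
Proof. apply Hwo. Qed.
Lemma trans : forall x y z, lt x y -> lt y z -> lt x z.
Proof. apply Hwo. Qed.
Lemma trich : forall x y, lt x y \/ x = y \/ lt y x.
Proof. apply Hwo. Qed.
Lemma wf : well_founded lt.
Proof. apply Hwo. Qed.

Lemma lt_le_trans x y z : lt x y -> le y z -> lt x z.
Proof. intros H [H'| <-]; [eapply trans; eauto| exact H]. Qed.
Lemma le_lt_trans x y z : le x y -> lt y z -> lt x z.
Proof. intros [H'| ->] H; [eapply trans; eauto| exact H]. Qed.
Lemma not_lt_le x y : ~ lt x y -> le y x.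
Proof. intros H. destruct (trich x y) as [h|[h|h]]; [tauto|right; auto|left; auto]. Qed.

Lemma wf_min (P : L -> Prop) : (exists x, P x) -> exists z, P z /\ forall y, P y -> ~ lt y z.
Proof.
  intros [x Px]. apply NNPP. intros Hn.
  assert (forall z, Acc lt z -> ~ P z).
  { intros z Az. induction Az as [z _ IH]. intros Pz. apply Hn. exists z. split; [exact Pz|].
    intros y Py Hy. exact (IH y Hy Py). }
  exact (H x (wf x) Px).
Qed.

Lemma small_nat : small M nat.
Proof. eapply small_inj; [exact Hnat|apply small_M]. Qed.

Lemma small_option (A : Type) : small M A -> small M (option A).
Proof.
  intros H. eapply small_inj; [|apply small_sum; [exact HMsum|exact H|apply small_unit; exact Hm0]].
  exists (fun o => match o with Some a => inl a | None => inr tt end).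
  intros [a|] [b|] E; try discriminate; [injection E as ->; reflexivity|reflexivity].
Qed.

Lemma small_le x : small M {y | le y x}.
Proof.
  eapply small_inj; [|apply small_option, (Hseg x)].
  exists (fun y => match excluded_middle_informative (lt (proj1_sig y) x) with
                   | left h => Some (exist _ (proj1_sig y) h) | right _ => None end).
  intros [y hy] [z hz]. simpl.
  destruct (excluded_middle_informative (lt y x)) as [h1|h1];
  destruct (excluded_middle_informative (lt z x)) as [h2|h2]; intros E; try discriminate.
  - injection E as E. apply sig_eq. exact E.
  - apply sig_eq. simpl. destruct hy as [hy|hy]; [tauto|]. destruct hz as [hz|hz]; [tauto|]. congruence.
Qed.

Lemma Core (I : Type) (f : I -> L) : small M I -> (forall z, exists i, lt z (f i)) -> False.
Proof.
  intros HI Hc. apply Hnot.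
  set (e := fun z => proj1_sig (cid (Hseg z))).
  assert (He : forall z, injective (e z)) by (intros z; exact (proj2_sig (cid (Hseg z)))).
  eapply card_le_trans; [|apply small_fun; [exact HMprod|exact HI]].
  exists (fun S => fun i => e (f i) (fun w => S (proj1_sig w))).
  intros S1 S2 E. apply functional_extensionality; intros x.
  destruct (Hc x) as [i Hi].
  assert (E2 := f_equal (fun G => G i) E). simpl in E2. apply He in E2.
  exact (f_equal (fun G => G (exist _ x Hi)) E2).
Qed.

Lemma no_max : forall x, exists y, lt x y.
Proof.
  intros x. apply NNPP. intros Hn. apply Hnot.
  eapply small_inj; [|apply (small_le x)].
  exists (fun y => exist (fun y => le y x) y (not_lt_le _ _ (fun h => Hn (ex_intro _ y h)))).
  intros a b E. exact (f_equal (@proj1_sig _ _) E).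
Qed.

Lemma bounded (I : Type) (f : I -> L) : small M I -> exists b, forall i, lt (f i) b.
Proof.
  intros HI. apply NNPP. intros Hn. apply (Core I f HI).
  intros z. destruct (no_max z) as [b Hb].
  apply NNPP. intros Hn2. apply Hn. exists b. intros i. apply NNPP. intros Hi.
  apply Hn2. exists i. eapply lt_le_trans; [exact Hb|]. apply not_lt_le. exact Hi.
Qed.

Lemma seq_mono (s : nat -> L) : (forall n, lt (s n) (s (S n))) -> forall n m, n <= m -> le (s n) (s m).
Proof.
  intros Hs n m H. induction H; [right; reflexivity|].
  left. eapply le_lt_trans; [exact IHle|apply Hs].
Qed.

Lemma sup_seq (s : nat -> L) : (forall n, lt (s n) (s (S n))) ->
  exists d, (forall n, lt (s n) d) /\ forall y, lt y d -> exists n, lt y (s n).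
Proof.
  intros Hs. destruct (bounded nat s small_nat) as [b Hb].
  destruct (wf_min (fun d => forall n, lt (s n) d)) as [d [Hd Hmin]]; [eauto|].
  exists d. split; [exact Hd|].
  intros y Hy. apply NNPP. intros Hn. apply (Hmin y); [|exact Hy].
  intros n. eapply lt_le_trans; [apply Hs|]. apply not_lt_le. intros h. apply Hn. eauto.
Qed.

Lemma club_inter (I : Type) (C : I -> L -> Prop) : small M I -> (forall i, club lt (C i)) ->
  club lt (fun x => forall i, C i x).
Proof.
  intros HI HC. split.
  - intros t [c [Hc Hct]] Hcof i. apply (proj1 (HC i)).
    + exists c; auto.
    + intros s Hs. destruct (Hcof s Hs) as [c' [H1 [H2 H3]]]. exists c'; auto.
  - set (nxt := fun i y => proj1_sig (cid (proj2 (HC i) y))).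
    assert (Hnxt : forall i y, C i (nxt i y) /\ lt y (nxt i y)) by (intros i y; exact (proj2_sig (cid (proj2 (HC i) y)))).
    assert (Hstep : forall y, exists b, lt y b /\ forall i, lt (nxt i y) b).
    { intros y. destruct (bounded (option I) (fun o => match o with None => y | Some i => nxt i y end)
        (small_option I HI)) as [b Hb].
      exists b. split; [exact (Hb None)|intros i; exact (Hb (Some i))]. }
    set (st := fun y => proj1_sig (cid (Hstep y))).
    assert (Hst : forall y, lt y (st y) /\ forall i, lt (nxt i y) (st y)) by (intros y; exact (proj2_sig (cid (Hstep y)))).
    intros x.
    set (s := nat_rect (fun _ => L) x (fun _ y => st y)).
    assert (Hs : forall n, lt (s n) (s (S n))) by (intros n; simpl; apply Hst).
    destruct (sup_seq s Hs) as [d [Hd1 Hd2]].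
    exists d. split; [|exact (Hd1 0)].
    intros i. apply (proj1 (HC i)).
    + exists (nxt i (s 0)). split; [apply Hnxt|]. eapply trans; [apply (proj2 (Hst (s 0)))|apply (Hd1 1)].
    + intros y Hy. destruct (Hd2 y Hy) as [n Hn].
      exists (nxt i (s n)). split; [apply Hnxt|]. split.
      * eapply trans; [exact Hn|apply Hnxt].
      * eapply trans; [apply (proj2 (Hst (s n)))|apply (Hd1 (S n))].
Qed.

Lemma club_inter2 (C1 C2 : L -> Prop) : club lt C1 -> club lt C2 -> club lt (fun x => C1 x /\ C2 x).
Proof.
  intros H1 H2.
  assert (H := club_inter bool (fun b => if b then C1 else C2)).
  assert (sb : small M bool).
  { eapply small_inj; [|exact small_nat]. exists (fun b : bool => if b then 0 else 1).
    intros [|] [|] E; simpl in E; congruence. }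
  specialize (H sb (fun b => match b with true => H1 | false => H2 end)).
  destruct H as [Hc Hu]. split.
  - intros t Ht Hcof. assert (X := Hc t).
    assert (forall b : bool, (if b then C1 else C2) t).
    { apply X.
      + destruct Ht as [c [[a b] h]]. exists c. split; [intros [|]; auto|exact h].
      + intros s0 Hs0. destruct (Hcof s0 Hs0) as [c [[a b] h]]. exists c. split; [intros [|]; auto|exact h]. }
    split; [exact (H true)|exact (H false)].
  - intros x. destruct (Hu x) as [c [Hc1 Hc2]]. exists c. split; [split; [exact (Hc1 true)|exact (Hc1 false)]|exact Hc2].
Qed.

Lemma diag (C : L -> L -> Prop) : (forall a, club lt (C a)) ->
  club lt (fun d => forall a, lt a d -> C a d).
Proof.
  intros HC. split.
  - intros t [c [Hc Hct]] Hcof a Ha. apply (proj1 (HC a)).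
    + destruct (Hcof a Ha) as [c' [H1 [H2 H3]]]. exists c'. split; [apply H1; exact H2|exact H3].
    + intros s Hs.
      destruct (trich s a) as [h|[h|h]].
      * destruct (Hcof a Ha) as [c' [H1 [H2 H3]]]. exists c'. split; [apply H1; exact H2|].
        split; [eapply trans; eauto|exact H3].
      * subst s. destruct (Hcof a Ha) as [c' [H1 [H2 H3]]]. exists c'. split; [apply H1; exact H2|]. auto.
      * destruct (Hcof s Hs) as [c' [H1 [H2 H3]]]. exists c'. split; [apply H1; eapply trans; eauto|]. auto.
  - assert (Hstep : forall y, exists c, lt y c /\ forall a, le a y -> C a c).
    { intros y.
      destruct (club_inter {a | le a y} (fun a => C (proj1_sig a)) (small_le y) (fun a => HC (proj1_sig a))) as [_ Hu].
      destruct (Hu y) as [c [Hc1 Hc2]]. exists c. split; [exact Hc2|].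
      intros a Ha. exact (Hc1 (exist _ a Ha)). }
    set (st := fun y => proj1_sig (cid (Hstep y))).
    assert (Hst : forall y, lt y (st y) /\ forall a, le a y -> C a (st y)) by (intros y; exact (proj2_sig (cid (Hstep y)))).
    intros x.
    set (s := nat_rect (fun _ => L) x (fun _ y => st y)).
    assert (Hs : forall n, lt (s n) (s (S n))) by (intros n; simpl; apply Hst).
    destruct (sup_seq s Hs) as [d [Hd1 Hd2]].
    exists d. split; [|exact (Hd1 0)].
    intros a Ha. destruct (Hd2 a Ha) as [n Hn].
    assert (Hin : forall m, n <= m -> C a (s (S m))).
    { intros m Hm. simpl. apply Hst. left. eapply lt_le_trans; [exact Hn|]. apply seq_mono; auto. }
    apply (proj1 (HC a)).
    + exists (s (S n)). split; [apply Hin; auto|apply Hd1].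
    + intros y Hy. destruct (Hd2 y Hy) as [k Hk].
      exists (s (S (Nat.max k n))). split; [apply Hin; lia|]. split; [|apply Hd1].
      eapply lt_le_trans; [exact Hk|]. left. apply (le_lt_trans _ (s (Nat.max k n))); [apply (seq_mono s Hs); lia|apply Hs].
Qed.


Lemma fix_ext (B : Type) (F : forall x, (forall y, lt y x -> B) -> B) :
  forall x (f g : forall y, lt y x -> B), (forall y p, f y p = g y p) -> F x f = F x g.
Proof.
  intros x f g H.
  assert (f = g) as ->; [|reflexivity].
  apply functional_extensionality_dep; intros y; apply functional_extensionality_dep; intros p; apply H.
Qed.

Lemma regular (A : L -> Prop) : unbounded lt A -> equipotent {x | A x} L.
Proof.
  intros HA.
  set (F := fun x (rec : forall y, lt y x -> L) =>
    epsilon (inhabits x) (fun a => (A a /\ forall y (h : lt y x), lt (rec y h) a) /\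
       forall b, (A b /\ forall y (h : lt y x), lt (rec y h) b) -> ~ lt b a)).
  set (g := Fix wf (fun _ => L) F).
  assert (Hg : forall x, g x = F x (fun y _ => g y)).
  { intros x. exact (Fix_eq wf (fun _ => L) F (fix_ext L F) x). }
  set (Px := fun x a => A a /\ forall y, lt y x -> lt (g y) a).
  assert (Hspec : forall x, (exists a, Px x a) -> Px x (g x) /\ forall b, Px x b -> ~ lt b (g x)).
  { intros x Hex. rewrite Hg. unfold F.
    apply (epsilon_spec (inhabits x) (fun a => (A a /\ forall y (h : lt y x), lt (g y) a) /\
       forall b, (A b /\ forall y (h : lt y x), lt (g y) b) -> ~ lt b a)).
    destruct (wf_min (Px x) Hex) as [z [Pz Hz]]. exists z. split; [exact Pz|]. exact Hz. }
  destruct (classic (forall x, exists a, Px x a)) as [Hall|Hex].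
  - assert (ginj : injective g).
    { intros x y E. destruct (trich x y) as [h|[h|h]]; [|exact h|].
      - exfalso. destruct (Hspec y (Hall y)) as [[_ Hy] _]. specialize (Hy x h). rewrite E in Hy. apply irr in Hy; tauto.
      - exfalso. destruct (Hspec x (Hall x)) as [[_ Hx] _]. specialize (Hx y h). rewrite E in Hx. apply irr in Hx; tauto. }
    apply (bij_equip _ _ (fun x => exist A (g x) (proj1 (proj1 (Hspec x (Hall x)))))).
    + intros x y E. apply ginj. exact (f_equal (@proj1_sig _ _) E).
    + intros [a Ha]. apply NNPP. intros Hn.
      assert (Hlt : forall x, lt (g x) a).
      { intros x. induction x as [x IH] using (well_founded_ind wf).
        assert (Pa : Px x a) by (split; [exact Ha|exact IH]).
        destruct (Hspec x (ex_intro _ a Pa)) as [_ Hm].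
        destruct (trich (g x) a) as [h|[h|h]]; [exact h| |exfalso; exact (Hm a Pa h)].
        exfalso. apply Hn. exists x. apply sig_eq. exact h. }
      apply Hnot. eapply small_inj; [|exact (Hseg a)].
      exists (fun x => exist (fun y => lt y a) (g x) (Hlt x)).
      intros x y E. apply ginj. exact (f_equal (@proj1_sig _ _) E).
  - exfalso. apply not_all_ex_not in Hex. destruct Hex as [x Hx].
    apply (Core {y | lt y x} (fun y => g (proj1_sig y)) (Hseg x)).
    intros z. destruct (HA z) as [a [Aa Hza]].
    apply NNPP. intros Hn. apply Hx. exists a. split; [exact Aa|].
    intros y Hy. apply NNPP. intros Hn2. apply Hn. exists (exist _ y Hy). simpl.
    eapply lt_le_trans; [exact Hza|]. apply not_lt_le; exact Hn2.
Qed.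

Lemma galvin : Gal_club L lt.
Proof.
  unfold Gal_club, Gal. intros Cc HCc Heq.
  set (clubOf := fun A : L -> Prop => epsilon (inhabits (fun _ : L => True))
                    (fun C => club lt C /\ forall x, C x -> A x)).
  assert (HclubOf : forall A, club_filter lt A -> club lt (clubOf A) /\ forall x, clubOf A x -> A x).
  { intros A HA. unfold clubOf. apply (epsilon_spec (inhabits (fun _ : L => True)) (fun C => club lt C /\ forall x, C x -> A x)).
    exact HA. }
  set (tr := fun (A : L -> Prop) a => fun x => le x a /\ clubOf A x).
  set (Fib := fun a T => {B : L -> Prop | Cc B /\ tr B a = T}).
  assert (Hgood : exists j, Cc j /\ forall a, ~ card_le (Fib a (tr j a)) {y | lt y a}).
  { apply NNPP. intros Hn.
    assert (Hbad : forall j : {B | Cc B}, exists a, card_le (Fib a (tr (proj1_sig j) a)) {y | lt y a}).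
    { intros [j cj]. simpl. apply NNPP. intros Hn2. apply Hn. exists j. split; [exact cj|].
      intros a Ha. apply Hn2. exists a. exact Ha. }
    set (Gspec := fun a T (G : (L -> Prop) -> L) => forall B B', Cc B -> tr B a = T -> Cc B' -> tr B' a = T -> G B = G B' -> B = B').
    assert (HG : forall a T, card_le (Fib a T) {y | lt y a} -> exists G, Gspec a T G).
    { intros a T [g Hg].
      exists (fun B => match excluded_middle_informative (Cc B /\ tr B a = T) with
                       | left h => proj1_sig (g (exist _ B h)) | right _ => a end).
      intros B B' c1 t1 c2 t2.
      destruct (excluded_middle_informative (Cc B /\ tr B a = T)) as [h1|h1]; [|tauto].
      destruct (excluded_middle_informative (Cc B' /\ tr B' a = T)) as [h2|h2]; [|tauto].
      intros E. apply sig_eq in E. apply Hg in E. exact (f_equal (@proj1_sig _ _) E). }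
    set (Gch := fun a T => epsilon (inhabits (fun _ : L -> Prop => a)) (Gspec a T)).
    set (aof := fun j => proj1_sig (cid (Hbad j))).
    set (e' := fun a => proj1_sig (cid (small_le a))).
    assert (He' : forall a, injective (e' a)) by (intros a; exact (proj2_sig (cid (small_le a)))).
    set (Phi := fun j : {B | Cc B} => (aof j, (e' (aof j) (fun w => tr (proj1_sig j) (aof j) (proj1_sig w)),
                     Gch (aof j) (tr (proj1_sig j) (aof j)) (proj1_sig j)))).
    assert (Phi_inj : injective Phi).
    { intros [B1 c1] [B2 c2] E. unfold Phi in E. simpl in E.
      pose proof (proj2_sig (cid (Hbad (exist _ B1 c1)))) as H1. simpl in H1.
      change (proj1_sig (cid (Hbad (exist _ B1 c1)))) with (aof (exist _ B1 c1)) in H1.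
      revert E H1. generalize (aof (exist _ B1 c1)) (aof (exist _ B2 c2)). intros a1 a2 E H1.
      injection E as E1 E2 E3. subst a2.
      apply He' in E2.
      assert (Htr : tr B1 a1 = tr B2 a1).
      { apply pred_ext. intros x. destruct (classic (le x a1)) as [hx|hx].
        - assert (X := f_equal (fun G => G (exist _ x hx)) E2). simpl in X. rewrite X. tauto.
        - unfold tr. tauto. }
      assert (Hs : Gspec a1 (tr B1 a1) (Gch a1 (tr B1 a1))).
      { unfold Gch. apply epsilon_spec. apply HG. exact H1. }
      apply sig_eq. simpl. rewrite <- Htr in E3.
      exact (Hs B1 B2 c1 eq_refl c2 (eq_sym Htr) E3). }
    apply Hnot.
    eapply card_le_trans; [exact (equip_inv _ _ Heq)|].
    eapply card_le_trans; [exists Phi; exact Phi_inj|].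
    destruct HLW as [hL HhL]. destruct (WW_W M HMsum) as [p Hp].
    exists (fun t => p (hL (fst t), p (fst (snd t), hL (snd (snd t))))).
    intros [x [w y]] [x' [w' y']] E. simpl in E.
    apply Hp in E. injection E as E1 E2. apply HhL in E1. apply Hp in E2. injection E2 as E2 E3.
    apply HhL in E3. subst. reflexivity. }
  destruct Hgood as [j [cj Hj]].
  set (F := fun a (rec : forall y, lt y a -> L -> Prop) =>
    epsilon (inhabits (fun _ : L => True)) (fun B => Cc B /\ tr B a = tr j a /\ forall y (h : lt y a), B <> rec y h)).
  set (i := Fix wf (fun _ => L -> Prop) F).
  assert (Hi : forall a, i a = F a (fun y _ => i y)).
  { intros a. exact (Fix_eq wf (fun _ => L -> Prop) F (fix_ext (L -> Prop) F) a). }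
  assert (Hspec : forall a, Cc (i a) /\ tr (i a) a = tr j a /\ forall y, lt y a -> i a <> i y).
  { intros a. rewrite Hi. unfold F.
    apply (epsilon_spec (inhabits (fun _ : L => True)) (fun B => Cc B /\ tr B a = tr j a /\ forall y (h : lt y a), B <> i y)).
    apply NNPP. intros Hn. apply (Hj a).
    assert (Hc : forall B : Fib a (tr j a), exists y, lt y a /\ proj1_sig B = i y).
    { intros [B [cB tB]]. simpl. apply NNPP. intros Hn2. apply Hn. exists B. split; [exact cB|]. split; [exact tB|].
      intros y h e. apply Hn2. exists y. split; assumption. }
    exists (fun B => exist (fun y => lt y a) (proj1_sig (cid (Hc B))) (proj1 (proj2_sig (cid (Hc B))))).
    intros B1 B2 E. apply (f_equal (@proj1_sig _ _)) in E. simpl in E.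
    apply sig_eq. rewrite (proj2 (proj2_sig (cid (Hc B1)))), (proj2 (proj2_sig (cid (Hc B2)))). rewrite E. reflexivity. }
  assert (iinj : injective i).
  { intros a b E. destruct (trich a b) as [h|[h|h]]; [|exact h|].
    - exfalso. exact (proj2 (proj2 (Hspec b)) a h (eq_sym E)).
    - exfalso. exact (proj2 (proj2 (Hspec a)) b h E). }
  exists (fun B => exists a, i a = B).
  split; [|split].
  - intros A [a <-]. apply Hspec.
  - apply (bij_equip _ _ (fun a => exist (fun B => exists a, i a = B) (i a) (ex_intro _ a eq_refl))).
    + intros a b E. apply iinj. exact (f_equal (@proj1_sig _ _) E).
    + intros [B [a e]]. exists a. apply sig_eq. exact e.
  - exists (fun d => clubOf j d /\ forall a, lt a d -> clubOf (i a) d).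
    split.
    + apply club_inter2.
      * exact (proj1 (HclubOf j (HCc j cj))).
      * apply diag. intros a. exact (proj1 (HclubOf (i a) (HCc _ (proj1 (Hspec a))))).
    + intros x [Hx1 Hx2] A [a <-].
      destruct (classic (lt a x)) as [h|h].
      * exact (proj2 (HclubOf (i a) (HCc _ (proj1 (Hspec a)))) x (Hx2 a h)).
      * apply (proj2 (HclubOf (i a) (HCc _ (proj1 (Hspec a))))).
        assert (X := f_equal (fun T => T x) (proj1 (proj2 (Hspec a)))). simpl in X. unfold tr in X.
        assert (Hle : le x a) by (apply not_lt_le; exact h).
        assert (Y : le x a /\ clubOf j x) by (split; assumption).
        rewrite <- X in Y. exact (proj2 Y).
Qed.

Lemma main_props : regular_uncountable_cardinal L lt /\ Gal_club L lt /\ ~ card_le L M.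
Proof.
  split; [|split].
  - split; [split; [split|]|].
    + exact Hwo.
    + intros t Ht. apply Hnot. eapply small_inj; [apply equip_le; exact Ht|exact (Hseg t)].
    + exact regular.
    + intros H. apply Hnot. eapply small_inj; [exact H|exact small_nat].
  - exact galvin.
  - intros H. apply Hnot. eapply small_inj; [exact H|apply small_M].
Qed.

End Main.


Definition sum_lt {A B : Type} (la : A -> A -> Prop) (lb : B -> B -> Prop) (x y : A + B) : Prop :=
  match x, y with
  | inl a, inl a' => la a a'
  | inr b, inr b' => lb b b'
  | inl _, inr _ => True
  | inr _, inl _ => False
  end.

Lemma sum_wo (A B : Type) (la : A -> A -> Prop) (lb : B -> B -> Prop) :
  strict_wellorder la -> strict_wellorder lb -> strict_wellorder (sum_lt la lb).
Proof.
  intros [ia [ta [ca wa]]] [ib [tb [cb wb]]].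
  split; [|split; [|split]].
  - intros [a|b]; simpl; auto.
  - intros [a|b] [a'|b'] [a''|b'']; simpl; eauto; tauto.
  - intros [a|b] [a'|b']; simpl; auto.
    + destruct (ca a a') as [h|[h|h]]; [left; exact h|right; left; congruence|right; right; exact h].
    + destruct (cb b b') as [h|[h|h]]; [left; exact h|right; left; congruence|right; right; exact h].
  - assert (HA : forall a, Acc (sum_lt la lb) (inl a)).
    { intros a. induction (wa a) as [a _ IH]. constructor. intros [a'|b'] H; simpl in H; [apply IH; exact H|contradiction]. }
    intros [a|b]; [apply HA|].
    induction (wb b) as [b _ IH]. constructor. intros [a'|b'] H; simpl in H; [apply HA|apply IH; exact H].
Qed.

Lemma unit_wo : strict_wellorder (fun _ _ : unit => False).
Proof.
  split; [|split; [|split]]; auto.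
  - intros [] []; auto.
  - intros x; constructor; intros y [].
Qed.

Lemma wf_min_gen (X : Type) (R : X -> X -> Prop) (wfR : well_founded R) (P : X -> Prop) :
  (exists x, P x) -> exists z, P z /\ forall y, P y -> ~ R y z.
Proof.
  intros [x Px]. apply NNPP. intros Hn.
  assert (forall z, Acc R z -> ~ P z).
  { intros z Az. induction Az as [z _ IH]. intros Pz. apply Hn. exists z. split; [exact Pz|].
    intros y Py Hy. exact (IH y Hy Py). }
  exact (H x (wfR x) Px).
Qed.

Theorem part1 (K : Univ) : exists (L : Univ) (lt : L -> L -> Prop),
       regular_uncountable_cardinal L lt /\ card_lt K L /\ Gal_club L lt.
Proof.
  set (M := (nat -> (K + bool))%type : Univ).
  assert (HMsum : card_le (M + M) M).
  { exists (fun z : M + M => match z with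
       | inl f => fun n => match n with 0 => inr true | S k => f k end
       | inr f => fun n => match n with 0 => inr false | S k => f k end end).
    intros [f|f] [g|g] E;
      pose proof (f_equal (fun h => h 0) E) as E0; simpl in E0; try discriminate;
      f_equal; apply functional_extensionality; intros k; exact (f_equal (fun h => h (S k)) E). }
  assert (HMprod : card_le (M * M) M).
  { exists (fun p : M * M => fun n => if Nat.even n then fst p (Nat.div2 n) else snd p (Nat.div2 n)).
    intros [f g] [f' g'] E. simpl in E.
    f_equal; apply functional_extensionality; intros k.
    - pose proof (f_equal (fun h => h (2 * k)) E) as X. cbv beta in X.
      rewrite Nat.even_even, Nat.div2_even in X. exact X.
    - pose proof (f_equal (fun h => h (2 * k + 1)) E) as X. cbv beta in X.
      rewrite Nat.even_odd, Nat.div2_odd' in X. exact X. }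
  assert (Hm0 : M) by exact (fun _ => inr true).
  assert (Hnat : card_le nat M).
  { exists (fun n => fun m => inr (Nat.eqb m n)).
    intros n n' E. pose proof (f_equal (fun h => h n) E) as X. simpl in X.
    injection X as X. rewrite Nat.eqb_refl in X. symmetry in X. apply Nat.eqb_eq in X. exact X. }
  assert (HKM : card_le K M).
  { exists (fun k => fun _ => inl k). intros k k' E.
    pose proof (f_equal (fun h => h 0) E) as X. simpl in X. injection X as X. exact X. }
  set (W := (M -> Prop)).
  destruct (wo_exists M) as [ltM HltM].
  destruct (wo_exists W) as [ltW HltW].
  set (X := ((M + W) + unit)%type).
  set (ltX := @sum_lt (M + W) unit (sum_lt ltM ltW) (fun _ _ => False)).
  assert (HX : strict_wellorder ltX) by (apply sum_wo; [apply sum_wo; assumption|apply unit_wo]).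
  set (Q := fun t => ~ small M {y | ltX y t}).
  assert (Qtop : Q (inr tt)).
  { intros H. apply (cantor W). eapply small_inj; [|exact H].
    exists (fun S => exist (fun y => ltX y (inr tt)) (inl (inr S)) I).
    intros S S' E. apply (f_equal (@proj1_sig _ _)) in E. simpl in E. congruence. }
  destruct (wf_min_gen X ltX (proj2 (proj2 (proj2 HX))) Q (ex_intro _ _ Qtop)) as [lam [Qlam Hlam]].
  assert (notQm : forall m, ~ Q (inl (inl m))).
  { intros m H. apply H.
    eapply small_inj; [|apply small_M].
    exists (fun y => match proj1_sig y with inl (inl m') => m' | _ => m end).
    intros [[[a|a]|a] ha] [[[b|b]|b] hb]; simpl in *; try contradiction; intros E; subst.
    apply sig_eq. reflexivity. }
  assert (Hmlt : forall m, ltX (inl (inl m)) lam).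
  { intros m. destruct lam as [[m'|S0]|[]]; simpl; auto. exfalso. exact (notQm m' Qlam). }
  set (L := {t | ltX t lam} : Univ).
  set (ltL := fun x y : L => ltX (proj1_sig x) (proj1_sig y)).
  assert (HwoL : strict_wellorder ltL).
  { destruct HX as [i1 [t1 [c1 w1]]]. split; [|split; [|split]].
    - intros x; apply i1.
    - intros x y z; apply t1.
    - intros x y. destruct (c1 (proj1_sig x) (proj1_sig y)) as [h|[h|h]]; [left; exact h|right; left; apply sig_eq; exact h|right; right; exact h].
    - exact (wf_inverse_image L X ltX (@proj1_sig _ _) w1). }
  assert (Hseg : forall x : L, small M {y : L | ltL y x}).
  { intros x. assert (H : ~ Q (proj1_sig x)) by (intros Hq; exact (Hlam _ Hq (proj2_sig x))).
    apply NNPP in H. eapply small_inj; [|exact H].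
    exists (fun y => exist (fun t => ltX t (proj1_sig x)) (proj1_sig (proj1_sig y)) (proj2_sig y)).
    intros y z E. apply (f_equal (@proj1_sig _ _)) in E. simpl in E. apply sig_eq. apply sig_eq. exact E. }
  assert (HLW : card_le L (M -> Prop)).
  { destruct (WW_W M HMsum) as [p Hp].
    exists (fun x : L => match proj1_sig x with
                     | inl (inl m) => p (fun _ => False, fun z => z = m)
                     | inl (inr S1) => p (fun _ => True, S1)
                     | inr _ => p (fun _ => True, fun _ => True) end).
    intros [[[a|a]|a] ha] [[[b|b]|b] hb]; simpl; intros E; apply Hp in E; pose proof (f_equal fst E) as E1; pose proof (f_equal snd E) as E2; simpl in E1, E2;
      try (destruct lam as [[?|?]|[]]; simpl in ha, hb; contradiction);
      try (exfalso; pose proof (f_equal (fun h => h Hm0) E1) as Z; simpl in Z; rewrite Z; exact I);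
      try (exfalso; pose proof (f_equal (fun h => h Hm0) E1) as Z; simpl in Z; rewrite <- Z; exact I);
      apply sig_eq; simpl; f_equal; f_equal; try exact E2.
    pose proof (f_equal (fun h => h a) E2) as Z. simpl in Z. rewrite <- Z. reflexivity. }
  assert (HML : card_le M L).
  { exists (fun m => exist (fun t => ltX t lam) (inl (inl m)) (Hmlt m)).
    intros m m' E. apply (f_equal (@proj1_sig _ _)) in E. simpl in E. congruence. }
  destruct (main_props M L ltL HMsum HMprod Hm0 Hnat HwoL Hseg Qlam HLW) as [H1 [H2 H3]].
  exists L, ltL. split; [exact H1|split; [|exact H2]].
  split.
  - eapply card_le_trans; eassumption.
  - intros H. apply H3. eapply card_le_trans; eassumption.
Qed.

Theorem proposition3p7 :
  (forall K : Univ,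
     exists (L : Univ) (lt : L -> L -> Prop),
       regular_uncountable_cardinal L lt /\ card_lt K L /\ Gal_club L lt)
  /\
  ~ (forall (T : Univ) (lt : T -> T -> Prop),
       regular_uncountable_cardinal T lt -> ~ Gal_club T lt).
Proof.
  split; [exact part1|].
  intros H. destruct (part1 unit) as [L [lt [H1 [_ H2]]]]. exact (H L lt H1 H2).
Qed.
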